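(* Let $k$ be an arbitrary field, $Q$ a finitely generated commutative monoid, $I\subseteq k[Q]$ a binomial ideal, and $\mathfrak p=I_{\sigma,P}$ a binomial prime ideal of $k[Q]$ (with $P\subset Q$ a prime ideal and $\sigma$ a character on a subgroup of $G_P$). Then the kernel of the natural homomorphism from $k[Q]$ to the ordinary localization $(k[Q]/I)_{\mathfrak p}$ contains the binomial localization $I+M_\infty^P(I)+M_\sigma^P(I)$.
   Context: $k[Q]=\bigoplus_q k\,t^q$; binomial ideals generated by $t^p-\lambda t^q$; $\sim_I$: $p\sim_I q$ iff $t^p-\lambda t^q\in I$ for some $\lambda\in k^*$. Prime ideals $P$ of $Q$ ($\varnothing$ prime iff $Q$ has no nil); $Q_P$ the localization (differences $a-u$, $u\notin P$), $G_P$ its unit group, $k[Q]_P=k[Q_P]$, $I_P=Ik[Q]_P$, $\mathfrak m_P=\langle t^p:p\in P_P\rangle$; $\bar Q_P$ the localization of $Q/\sim_I$ at the image of $Q\setminus P$. For $K\subseteq G_P$ and $\rho:K\to k^*$: $I_\rho=\langle t^{g+v}-\rho(g)t^v: g\in K,v\in Q_P\rangle\subseteq k[Q]_P$, $I_{\rho,P}$ = preimage in $k[Q]$ of $I_\rho+\mathfrak m_P$. For $q\in Q$ with $t^q\notin I_P$: $K_q^P=\{g\in G_P:\overline{g+q}=\bar q\text{ in }\bar Q_P\}$ and the character of $I_P$ at $q$ is $\rho_q^P:K_q^P\to k^*$ with $(I_P:t^q)+\mathfrak m_P=I_{\rho_q^P}+\mathfrak m_P$. The \emph{$P$-infinite ideal}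 $M_\infty^P(I)\subseteq k[Q]$ is generated by monomials $t^q$ such that $\overline{q+p}=\bar q$ in $\bar Q_P$ for some $p\in P$. The \emph{incommensurate ideal} $M_\sigma^P(I)$ is spanned over $k$ by the monomials $t^q$ with $t^q\notin I_P$ such that $\rho_q^P$ is not a restriction of $\sigma$ (i.e. either $K_q^P\not\subseteq$ domain of $\sigma$, or $\rho_q^P\neq\sigma|_{K_q^P}$), together with those $t^q\in I_P$. *)

(* Defs.v *)
(* Monoid algebras k[M] are modelled as finite formal sums
   (seq (k * M)), with equality "peq r" = equality of all coefficients, where
   r is the equality relation of the monoid M (Leibniz equality for Q, the
   localization congruence for Q_P). *)
From HB Require Import structures.
From mathcomp Require Import all_boot all_order all_algebra.
From Stdlib Require Import ClassicalEpsilon.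
Set Implicit Arguments. Unset Strict Implicit. Unset Printing Implicit Defensive.
Import GRing.Theory.
Local Open Scope ring_scope.

Definition cl (A : Prop) : bool :=
  if excluded_middle_informative A then true else false.

Section MonoidAlgebra.
Variables (k : fieldType) (M : Type).

Definition mpoly := seq (k * M).

Definition coef (r : M -> M -> Prop) (f : mpoly) (m : M) : k :=
  \sum_(x <- f) (if cl (r x.2 m) then x.1 else 0).

Definition peq r (f g : mpoly) := forall m, coef r f m = coef r g m.

Definition pmul (add : M -> M -> M) (f g : mpoly) : mpoly :=
  [seq (x.1 * y.1, add x.2 y.2) | x <- f, y <- g].

Definition mono (c : k) (m : M) : mpoly := [:: (c, m)].

Definition binom (p q : M) (c : k) : mpoly := [:: (1, p); (- c, q)].

Definition gen_ideal r add (D S : mpoly -> Prop) (f : mpoly) : Prop :=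
  D f /\ exists l : seq (mpoly * mpoly),
    (forall x, List.In x l -> D x.1 /\ S x.2) /\
    peq r f (flatten [seq pmul add x.1 x.2 | x <- l]).

Definition isum r (D J1 J2 : mpoly -> Prop) (f : mpoly) : Prop :=
  D f /\ exists f1 f2, J1 f1 /\ J2 f2 /\ peq r f (f1 ++ f2).

Definition kspan r (A : M -> Prop) (f : mpoly) : Prop :=
  exists l : mpoly, (forall x, List.In x l -> A x.2) /\ peq r f l.

End MonoidAlgebra.

Section MonoidQ.
Variables (k : fieldType) (Q : nmodType).

Definition fin_gen := exists gens : seq Q, forall q : Q,
  exists l : seq Q, (forall x, List.In x l -> List.In x gens) /\ q = \sum_(x <- l) x.

(* prime ideal of Q; by the paper's convention a nil (absorbing element)
   lies in every prime ideal, so the empty set is prime iff Q has no nil *)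
Definition prime_mideal (P : Q -> Prop) :=
  (exists q, ~ P q) /\
  (forall p q, P p -> P (p + q)) /\
  (forall p q, P (p + q) -> P p \/ P q) /\
  (forall z, (forall q, z + q = z) -> P z).

Definition qeq (f g : mpoly k Q) := peq (@eq Q) f g.
Definition qmul (f g : mpoly k Q) := pmul (@GRing.add Q) f g.

Definition is_ideal (J : mpoly k Q -> Prop) :=
  (forall f g, qeq f g -> J f -> J g) /\ J [::] /\
  (forall f g, J f -> J g -> J (f ++ g)) /\
  (forall f g, J g -> J (qmul f g)).

Definition prime_ideal (J : mpoly k Q -> Prop) :=
  is_ideal J /\ ~ J (mono 1 0) /\ forall f g, J (qmul f g) -> J f \/ J g.

Definition binomial_ideal (I : mpoly k Q -> Prop) :=
  exists B : Q -> Q -> k -> Prop, forall f : mpoly k Q,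
    I f <-> gen_ideal (@eq Q) (@GRing.add Q) (fun _ => True)
              (fun g => exists p q c, B p q c /\ g = binom p q c) f.

Definition simI (I : mpoly k Q -> Prop) (p q : Q) :=
  exists c : k, c != 0 /\ I (binom p q c).

(* ---- the localization Q_P : pairs (a,u) stand for a - u, u not in P ---- *)
Definition locr (P : Q -> Prop) (x y : Q * Q) :=
  exists w, ~ P w /\ x.1 + y.2 + w = y.1 + x.2 + w.
Definition locadd (x y : Q * Q) : Q * Q := (x.1 + y.1, x.2 + y.2).

Definition GP (P : Q -> Prop) (g : Q * Q) :=
  ~ P g.2 /\ exists h : Q * Q, ~ P h.2 /\ locr P (locadd g h) (0, 0).

(* ---- the ring k[Q]_P = k[Q_P] ---- *)
Definition kQP_dom (P : Q -> Prop) (f : mpoly k (Q * Q)) :=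
  forall x, List.In x f -> ~ P x.2.2.
Definition toP (f : mpoly k Q) : mpoly k (Q * Q) := [seq (x.1, (x.2, 0)) | x <- f].
Definition locideal (P : Q -> Prop) (S : mpoly k (Q * Q) -> Prop) :=
  gen_ideal (locr P) locadd (kQP_dom P) S.
Definition locsum (P : Q -> Prop) (J1 J2 : mpoly k (Q * Q) -> Prop) :=
  isum (locr P) (kQP_dom P) J1 J2.

Definition IP (I : mpoly k Q -> Prop) (P : Q -> Prop) :=
  locideal P (fun g => exists f, I f /\ g = toP f).
Definition mP (P : Q -> Prop) :=
  locideal P (fun g => exists a u, P a /\ ~ P u /\ g = mono 1 (a, u)).
Definition Irho (P : Q -> Prop) (K : Q * Q -> Prop) (rho : Q * Q -> k) :=
  locideal P (fun g => exists h v, K h /\ ~ P v.2 /\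
                                   g = binom (locadd h v) v (rho h)).
Definition colon (P : Q -> Prop) (J : mpoly k (Q * Q) -> Prop) (q : Q)
    (f : mpoly k (Q * Q)) :=
  kQP_dom P f /\ J (pmul locadd (mono 1 (q, 0)) f).

Definition is_character (P : Q -> Prop) (K : Q * Q -> Prop) (rho : Q * Q -> k) :=
  (forall g, K g -> GP P g) /\
  (forall g h, K g -> ~ P h.2 -> locr P g h -> K h /\ rho g = rho h) /\
  K (0, 0) /\
  (forall g h, K g -> K h -> K (locadd g h)) /\
  (forall g, K g -> K (g.2, g.1)) /\
  (forall g, K g -> rho g != 0) /\
  (forall g h, K g -> K h -> rho (locadd g h) = rho g * rho h).

(* equality in \bar Q_P of the images of x, y in Q_P *)
Definition barr (I : mpoly k Q -> Prop) (P : Q -> Prop) (x y : Q * Q) :=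
  exists w, ~ P w /\ simI I (x.1 + y.2 + w) (y.1 + x.2 + w).

Definition Kq (I : mpoly k Q -> Prop) (P : Q -> Prop) (q : Q) (g : Q * Q) :=
  GP P g /\ barr I P (locadd g (q, 0)) (q, 0).

Definition char_at (I : mpoly k Q -> Prop) (P : Q -> Prop) (q : Q) (rho : Q * Q -> k) :=
  is_character P (Kq I P q) rho /\
  forall f, kQP_dom P f ->
    (locsum P (colon P (IP I P) q) (mP P) f <->
     locsum P (Irho P (Kq I P q) rho) (mP P) f).

Definition restricts (K : Q * Q -> Prop) (sigma : Q * Q -> k)
    (K' : Q * Q -> Prop) (rho : Q * Q -> k) :=
  (forall g, K' g -> K g) /\ (forall g, K' g -> rho g = sigma g).

Definition Minf (I : mpoly k Q -> Prop) (P : Q -> Prop) :=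
  gen_ideal (@eq Q) (@GRing.add Q) (fun _ => True)
    (fun g : mpoly k Q => exists q p, P p /\ barr I P (q + p, 0) (q, 0) /\ g = mono 1 q).

Definition Msig (I : mpoly k Q -> Prop) (P : Q -> Prop)
    (K : Q * Q -> Prop) (sigma : Q * Q -> k) : mpoly k Q -> Prop :=
  kspan (@eq Q) (fun q =>
     IP I P (mono 1 (q, 0)) \/
     (~ IP I P (mono 1 (q, 0)) /\
      exists rho, char_at I P q rho /\ ~ restricts K sigma (Kq I P q) rho)).

(* the binomial prime I_{sigma,P}: preimage of I_sigma + m_P *)
Definition IsigP (P : Q -> Prop) (K : Q * Q -> Prop) (sigma : Q * Q -> k)
    (f : mpoly k Q) :=
  locsum P (Irho P K sigma) (mP P) (toP f).

Definition binloc (I : mpoly k Q -> Prop) (P : Q -> Prop)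
    (K : Q * Q -> Prop) (sigma : Q * Q -> k) (f : mpoly k Q) :=
  exists f1 f2 f3, I f1 /\ Minf I P f2 /\ Msig I P K sigma f3 /\
                   qeq f (f1 ++ f2 ++ f3).

(* kernel of k[Q] -> (k[Q]/I)_pp : f/1 = 0 iff s f in I for some s not in pp *)
Definition loc_kernel (I pp : mpoly k Q -> Prop) (f : mpoly k Q) :=
  exists s, ~ pp s /\ I (qmul s f).

End MonoidQ.

(* Main.v *)
Require Import Defs.
From HB Require Import structures.
From mathcomp Require Import all_boot all_order all_algebra.
From Stdlib Require Import Classical ClassicalEpsilon.
From Stdlib Require List.
Set Implicit Arguments. Unset Strict Implicit. Unset Printing Implicit Defensive.
Import GRing.Theory.
Local Open Scope ring_scope.


Lemma clT (A : Prop) : A -> cl A = true.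
Proof. by rewrite /cl; case: excluded_middle_informative. Qed.
Lemma clF (A : Prop) : ~ A -> cl A = false.
Proof. by rewrite /cl; case: excluded_middle_informative. Qed.
Lemma cl_iff (A B : Prop) : (A <-> B) -> cl A = cl B.
Proof.
move=> h; case: (classic A) => a.
  by rewrite !clT //; apply/h.
by rewrite !clF // => b; apply/a/h.
Qed.

Lemma In_cat (T : Type) (x : T) (s1 s2 : seq T) :
  List.In x (s1 ++ s2) <-> List.In x s1 \/ List.In x s2.
Proof.
elim: s1 => [|y s IH] /=; first by split; [right|case].
rewrite IH; tauto.
Qed.

Lemma In_flatten (T : Type) (x : T) (L : seq (seq T)) :
  List.In x (flatten L) -> exists s, List.In s L /\ List.In x s.
Proof.
elim: L => [|s L IH] //= /In_cat [h|/IH [s' [h1 h2]]].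
  by exists s; split; [left|].
by exists s'; split; [right|].
Qed.

Lemma In_map (T U : Type) (f : T -> U) (y : U) (s : seq T) :
  List.In y [seq f x | x <- s] -> exists x, List.In x s /\ y = f x.
Proof.
elim: s => [|x s IH] //= [<-|/IH [z [h1 h2]]].
  by exists x; split; [left|].
by exists z; split; [right|].
Qed.

Lemma In_map2 (T U : Type) (f : T -> U) (x : T) (s : seq T) :
  List.In x s -> List.In (f x) [seq f x | x <- s].
Proof. elim: s => [|y s IH] //= [<-|/IH]; [by left|by right]. Qed.

Lemma In_pmul (k : fieldType) (M : Type) (add : M -> M -> M) (F G : mpoly k M) z :
  List.In z (pmul add F G) -> exists x y, List.In x F /\ List.In y G /\
     z = (x.1 * y.1, add x.2 y.2).
Proof.
rewrite /pmul => h; have [s [h1 h2]] := In_flatten h.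
have [x [hx e]] := In_map h1; subst s.
have [y [hy e]] := In_map h2; subst z.
by exists x, y.
Qed.

Definition Phi {k : fieldType} {M : Type} (psi : M -> k) (F : mpoly k M) : k :=
  \sum_(x <- F) x.1 * psi x.2.
Definition ind {k : fieldType} {M : Type} (r : M -> M -> Prop) (m : M) : M -> k :=
  fun y => if cl (r y m) then 1 else 0.

Section Gen.
Variables (k : fieldType) (M : Type).
Implicit Types (F G : mpoly k M) (psi : M -> k).

Lemma coefPhi r F m : coef r F m = Phi (ind r m) F.
Proof.
rewrite /coef /Phi; apply: eq_bigr => x _; rewrite /ind.
by case: cl; rewrite ?mulr1 ?mulr0.
Qed.

Lemma Phi_nil psi : Phi psi [::] = 0.
Proof. by rewrite /Phi big_nil. Qed.
Lemma Phi_cons psi x F : Phi psi (x :: F) = x.1 * psi x.2 + Phi psi F.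
Proof. by rewrite /Phi big_cons. Qed.
Lemma Phi_cat psi F G : Phi psi (F ++ G) = Phi psi F + Phi psi G.
Proof. by rewrite /Phi big_cat. Qed.
Lemma Phi_flatten psi (L : seq (mpoly k M)) :
  Phi psi (flatten L) = \sum_(f <- L) Phi psi f.
Proof. by rewrite /Phi big_flatten. Qed.
Lemma Phi_ext psi psi' F : (forall y, List.In y F -> psi y.2 = psi' y.2) ->
  Phi psi F = Phi psi' F.
Proof.
elim: F => [|x F IH] h; first by rewrite !Phi_nil.
rewrite !Phi_cons h; last by left.
by rewrite IH // => y hy; apply: h; right.
Qed.
Lemma Phi_map (T : Type) psi (c : T -> k) (h : T -> M) (F : seq T) :
  Phi psi [seq (c x, h x) | x <- F] = \sum_(x <- F) c x * psi (h x).
Proof. by rewrite /Phi big_map. Qed.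

Lemma Phi_pmul add psi F G :
  Phi psi (pmul add F G) = Phi (fun a => Phi (fun b => psi (add a b)) G) F.
Proof.
rewrite /Phi /pmul big_allpairs_dep /=.
apply: eq_bigr => x _; rewrite big_distrr /=.
by apply: eq_bigr => y _ /=; rewrite mulrA.
Qed.

Lemma Phi_F2 (N : Type) psi (chi : N -> k) F (G : mpoly k N) :
  List.Forall2 (fun x y => x.1 = y.1 /\ psi x.2 = chi y.2) F G ->
  Phi psi F = Phi chi G.
Proof.
elim=> [|x y F' G' [h1 h2] _ IH]; first by rewrite /Phi !big_nil.
by rewrite /Phi !big_cons h1 h2; congr (_ + _); exact: IH.
Qed.

Lemma Phi_scal psi F c : \sum_(x <- F) c * (x.1 * psi x.2) = c * Phi psi F.
Proof. by rewrite /Phi big_distrr. Qed.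

Section GL.
Variables (r : M -> M -> Prop) (A : M -> Prop).
Hypotheses (rR : forall x, r x x) (rS : forall x y, r x y -> r y x)
  (rT : forall x y z, A y -> r x y -> r y z -> r x z).

Fixpoint pw (L : seq M) : Prop :=
  if L is m :: L' then (forall m', List.In m' L' -> ~ r m m') /\ pw L' else True.

Lemma reps_ex (S : mpoly k M) : (forall s, List.In s S -> A s.2) ->
  exists L, (forall m, List.In m L -> A m) /\ pw L /\
    forall s, List.In s S -> exists m, List.In m L /\ r s.2 m.
Proof.
elim: S => [|s S IH] hS.
  by exists [::]; split=> //; split.
have [L [h1 [h2 h3]]] : exists L, (forall m, List.In m L -> A m) /\ pw L /\
    forall s, List.In s S -> exists m, List.In m L /\ r s.2 m.
  by apply: IH => x hx; apply: hS; right.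
case: (classic (exists m, List.In m L /\ r s.2 m)) => hex.
  exists L; split=> //; split=> // x [<-|hx] //; exact: h3.
exists (s.2 :: L); split.
  by move=> m [<-|hm]; [apply: hS; left|apply: h1].
split; first by split=> // m hm hr; apply: hex; exists m.
move=> x [<-|hx]; first by exists s.2; split; [left|].
by have [m [hm hr]] := h3 x hx; exists m; split; [right|].
Qed.

Lemma sum_zero psi a c L : (forall m, List.In m L -> ~ r a m) ->
  \sum_(m <- L) psi m * (if cl (r a m) then c else 0) = 0.
Proof.
elim: L => [|m L IH] h; first by rewrite big_nil.
rewrite big_cons clF; last by apply: h; left.
by rewrite mulr0 add0r IH // => m' hm'; apply: h; right.
Qed.

Lemma sum_one psi (psiI : forall x y, A x -> A y -> r x y -> psi x = psi y)
  a c L : A a -> (forall m, List.In m L -> A m) -> pw L ->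
  (exists m, List.In m L /\ r a m) ->
  \sum_(m <- L) psi m * (if cl (r a m) then c else 0) = c * psi a.
Proof.
move=> Aa; elim: L => [|m L IH] hA hpw hex.
  by case: hex => m0 [].
rewrite big_cons.
case: (classic (r a m)) => ram.
  rewrite (clT ram) (sum_zero psi c (L := L)).
    rewrite addr0 (psiI a m) //; [by rewrite mulrC|by apply: hA; left].
  move=> m' hm' ram'; apply: (proj1 hpw m' hm').
  exact: (rT Aa (rS ram) ram').
rewrite (clF ram) mulr0 add0r IH //.
- by move=> m' hm'; apply: hA; right.
- exact: proj2 hpw.
case: hex => m0 [[e|h] hr]; first by subst m0.
by exists m0.
Qed.

Lemma expand psi (psiI : forall x y, A x -> A y -> r x y -> psi x = psi y)
  L F : (forall m, List.In m L -> A m) -> pw L ->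
  (forall x, List.In x F -> A x.2 /\ exists m, List.In m L /\ r x.2 m) ->
  Phi psi F = \sum_(m <- L) psi m * coef r F m.
Proof.
move=> hA hpw; elim: F => [|x F IH] hF.
  rewrite Phi_nil /coef; symmetry; apply: big1 => m _.
  by rewrite big_nil mulr0.
rewrite Phi_cons /coef.
under eq_bigr do rewrite big_cons mulrDr.
rewrite big_split /= -/(coef r F _) sum_one //.
- rewrite -IH; first by rewrite [x.1 * _]mulrC.
  by move=> y hy; apply: hF; right.
- by have [] := hF x (or_introl erefl).
- by have [] := hF x (or_introl erefl).
Qed.

Lemma GL psi (psiI : forall x y, A x -> A y -> r x y -> psi x = psi y) F G :
  (forall x, List.In x F -> A x.2) -> (forall x, List.In x G -> A x.2) ->
  peq r F G -> Phi psi F = Phi psi G.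
Proof.
move=> hF hG hFG.
have [L [h1 [h2 h3]]] := @reps_ex (F ++ G) (fun s hs =>
  match proj1 (In_cat s F G) hs with or_introl h => hF s h | or_intror h => hG s h end).
rewrite (@expand psi psiI L F) // ?(@expand psi psiI L G) //.
- by apply: eq_bigr => m _; rewrite hFG.
- by move=> x hx; split; [apply: hG|apply: h3; apply/In_cat; right].
- by move=> x hx; split; [apply: hF|apply: h3; apply/In_cat; left].
Qed.
End GL.
End Gen.


Lemma Phi_exch (k : fieldType) (M N : Type) (chi : M -> N -> k)
  (F : mpoly k M) (G : mpoly k N) :
  Phi (fun a => Phi (fun b => chi a b) G) F = Phi (fun b => Phi (fun a => chi a b) F) G.
Proof.
rewrite /Phi; under eq_bigr do rewrite big_distrr.
rewrite exchange_big; apply: eq_bigr => y _; rewrite big_distrr.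
by apply: eq_bigr => x _ /=; rewrite mulrCA.
Qed.

Lemma Phi_sum (k : fieldType) (M T : Type) (h : T -> M -> k) (L : seq T)
  (F : mpoly k M) :
  Phi (fun a => \sum_(g <- L) h g a) F = \sum_(g <- L) Phi (h g) F.
Proof.
rewrite /Phi; under eq_bigr do rewrite big_distrr.
by rewrite exchange_big.
Qed.

Lemma Phi_extf (k : fieldType) (M : Type) (psi psi' : M -> k) (F : mpoly k M) :
  (forall y, psi y = psi' y) -> Phi psi F = Phi psi' F.
Proof. by move=> h; apply: Phi_ext => y _; apply: h. Qed.

Lemma Phi_pmulA (k : fieldType) (M : Type) (add : M -> M -> M)
  (addA : forall x y z, add x (add y z) = add (add x y) z) psi (a b c : mpoly k M) :
  Phi psi (pmul add (pmul add a b) c) = Phi psi (pmul add a (pmul add b c)).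
Proof.
rewrite !Phi_pmul; apply: Phi_ext => x _; rewrite Phi_pmul.
by apply: Phi_ext => y _; apply: Phi_ext => z _; rewrite addA.
Qed.

Lemma Phi_pmulC (k : fieldType) (M : Type) (add : M -> M -> M)
  (addC : forall x y, add x y = add y x) psi (a b : mpoly k M) :
  Phi psi (pmul add a b) = Phi psi (pmul add b a).
Proof.
rewrite !Phi_pmul Phi_exch; apply: Phi_ext => x _; apply: Phi_ext => y _.
by rewrite addC.
Qed.

Lemma Phi_pmul_catr (k : fieldType) (M : Type) (add : M -> M -> M) psi (a f g : mpoly k M) :
  Phi psi (pmul add a (f ++ g)) = Phi psi (pmul add a f) + Phi psi (pmul add a g).
Proof.
rewrite !Phi_pmul; under Phi_extf do rewrite Phi_cat.
by rewrite /Phi -big_split; apply: eq_bigr => x _ /=; rewrite mulrDr.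
Qed.

Lemma Phi_pmul_flattenr (k : fieldType) (M : Type) (add : M -> M -> M) psi (a : mpoly k M) (L : seq (mpoly k M)) :
  Phi psi (pmul add a (flatten L)) = \sum_(f <- L) Phi psi (pmul add a f).
Proof.
rewrite Phi_pmul.
under Phi_extf do rewrite Phi_flatten.
rewrite Phi_sum; apply: eq_bigr => f _; by rewrite Phi_pmul.
Qed.

Lemma Phi_mono (k : fieldType) (M : Type) (psi : M -> k) (c : k) (m : M) : Phi psi (mono c m) = c * psi m.
Proof. by rewrite /Phi /mono big_cons big_nil addr0. Qed.

Section KQ.
Variables (k : fieldType) (Q : nmodType).
Implicit Types (f g h a s : mpoly k Q).

Lemma qeq_Phi f g : qeq f g -> forall psi, Phi psi f = Phi psi g.
Proof.
move=> hfg psi; apply: (@GL k Q (@eq Q) (fun _ => True)) => //.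
- by move=> x y z _ -> ->.
- by move=> x y _ _ ->.
Qed.

Lemma qeqP f g : (forall psi, Phi psi f = Phi psi g) -> qeq f g.
Proof. by move=> h; rewrite /qeq /peq => m; rewrite !coefPhi h. Qed.

Lemma qeq_refl f : qeq f f. Proof. by []. Qed.
Lemma qeq_sym f g : qeq f g -> qeq g f. Proof. by move=> h m; rewrite h. Qed.
Lemma qeq_trans f g h : qeq f g -> qeq g h -> qeq f h.
Proof. by move=> h1 h2 m; rewrite h1 h2. Qed.

Lemma qmul_qeqr a g g' : qeq g g' -> qeq (qmul a g) (qmul a g').
Proof.
move=> h; apply: qeqP => psi; rewrite /qmul !Phi_pmul; apply: Phi_ext => x _.
exact: qeq_Phi.
Qed.
Lemma qmul_qeql a g g' : qeq g g' -> qeq (qmul g a) (qmul g' a).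
Proof. by move=> h; apply: qeqP => psi; rewrite /qmul !Phi_pmul; apply: qeq_Phi. Qed.
Lemma qmulC a b : qeq (qmul a b) (qmul b a).
Proof. apply: qeqP => psi; apply: Phi_pmulC; exact: addrC. Qed.
Lemma qmulA a b c : qeq (qmul (qmul a b) c) (qmul a (qmul b c)).
Proof. apply: qeqP => psi; apply: Phi_pmulA; exact: addrA. Qed.
Lemma qmul_catr a f g : qeq (qmul a (f ++ g)) (qmul a f ++ qmul a g).
Proof. by apply: qeqP => psi; rewrite Phi_cat Phi_pmul_catr. Qed.
Lemma qeq_cat f f' g g' : qeq f f' -> qeq g g' -> qeq (f ++ g) (f' ++ g').
Proof. by move=> h1 h2; apply: qeqP => psi; rewrite !Phi_cat (qeq_Phi h1) (qeq_Phi h2). Qed.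
Lemma qmul1 f : qeq (qmul (mono 1 0) f) f.
Proof.
apply: qeqP => psi; rewrite /qmul Phi_pmul Phi_mono mul1r.
by apply: Phi_ext => y _; rewrite add0r.
Qed.

Lemma bin_ideal (I : mpoly k Q -> Prop) : binomial_ideal I -> is_ideal I.
Proof.
case=> B HB; split; [|split; [|split]].
- move=> f g hfg /HB [_ [l [hl he]]]; apply/HB; split=> //; exists l; split=> //.
  by move=> m; rewrite -hfg he.
- by apply/HB; split=> //; exists [::].
- move=> f g /HB [_ [l1 [hl1 he1]]] /HB [_ [l2 [hl2 he2]]]; apply/HB; split=> //.
  exists (l1 ++ l2); split.
    by move=> x /In_cat [/hl1|/hl2].
  by move=> m; rewrite map_cat flatten_cat !coefPhi !Phi_cat -!coefPhi he1 he2.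
- move=> f g /HB [_ [l [hl he]]]; apply/HB; split=> //.
  exists [seq (qmul f x.1, x.2) | x <- l]; split.
    move=> x hx; have [y [hy ->]] := In_map hx; split=> //; exact: proj2 (hl y hy).
  apply: qeq_trans (qmul_qeqr f he) _.
  apply: qeqP => psi; rewrite /qmul Phi_pmul_flattenr Phi_flatten big_map -map_comp big_map.
  by apply: eq_bigr => x _ /=; rewrite Phi_pmulA //; exact: addrA.
Qed.

Variables (I pp : mpoly k Q -> Prop).
Hypotheses (HI : binomial_ideal I) (Hpp : prime_ideal pp).

Let II := bin_ideal HI.
Lemma I_qeq f g : qeq f g -> I f -> I g. Proof. exact: (proj1 II). Qed.
Lemma I_mul f g : I g -> I (qmul f g). Proof. exact: (proj2 (proj2 (proj2 II))). Qed.
Lemma I_cat f g : I f -> I g -> I (f ++ g). Proof. exact: (proj1 (proj2 (proj2 II))). Qed.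
Lemma I_nil : I [::]. Proof. exact: (proj1 (proj2 II)). Qed.

Lemma pp_mul s t : ~ pp s -> ~ pp t -> ~ pp (qmul s t).
Proof. by move=> h1 h2 /(proj2 (proj2 Hpp)) [/h1|/h2]. Qed.

Lemma N_qeq g g' : qeq g g' -> loc_kernel I pp g -> loc_kernel I pp g'.
Proof. by move=> h [s [hs hI]]; exists s; split=> //; apply: I_qeq hI; apply: qmul_qeqr. Qed.

Lemma N_mul a g : loc_kernel I pp g -> loc_kernel I pp (qmul a g).
Proof.
move=> [s [hs hI]]; exists s; split=> //.
apply: (I_qeq _ (I_mul a hI)).
apply: qeq_trans (qeq_sym (qmulA _ _ _)) _.
apply: qeq_trans (qmul_qeql _ (qmulC _ _)) _.
exact: qmulA.
Qed.

Lemma N_cat g1 g2 : loc_kernel I pp g1 -> loc_kernel I pp g2 -> loc_kernel I pp (g1 ++ g2).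
Proof.
move=> [s1 [hs1 hI1]] [s2 [hs2 hI2]]; exists (qmul s1 s2); split.
  exact: pp_mul.
have h : I (qmul s2 (qmul s1 g1) ++ qmul s1 (qmul s2 g2)) by apply: I_cat; apply: I_mul.
apply: (I_qeq _ h); apply: qeq_sym.
apply: qeq_trans (qmul_catr _ _ _) _; apply: qeq_cat.
- apply: qeq_trans (qmul_qeql _ (qmulC _ _)) _; exact: qmulA.
- exact: qmulA.
Qed.

Lemma N_I g : I g -> loc_kernel I pp g.
Proof. by move=> h; exists (mono 1 0); split; [exact: (proj1 (proj2 Hpp))|apply: I_mul]. Qed.

Lemma N_flatten (L : seq (mpoly k Q)) : (forall g, List.In g L -> loc_kernel I pp g) ->
  loc_kernel I pp (flatten L).
Proof.
elim: L => [|g L IH] h /=; first by apply: N_I; exact: I_nil.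
by apply: N_cat; [apply: h; left|apply: IH => x hx; apply: h; right].
Qed.

Lemma N_gen (S : mpoly k Q -> Prop) f : (forall s, S s -> loc_kernel I pp s) ->
  gen_ideal (@eq Q) (@GRing.add Q) (fun _ => True) S f -> loc_kernel I pp f.
Proof.
move=> hS [_ [l [hl he]]]; apply: N_qeq (qeq_sym he) _.
apply: N_flatten => g hg; have [x [hx ->]] := In_map hg; apply: N_mul; apply: hS.
exact: proj2 (hl x hx).
Qed.

Lemma N_kspan (A : Q -> Prop) f : (forall q, A q -> loc_kernel I pp (mono 1 q)) ->
  kspan (@eq Q) A f -> loc_kernel I pp f.
Proof.
move=> hA [l [hl he]]; apply: N_qeq (qeq_sym he) _.
elim: l hl {he} => [|x l IH] hl; first by apply: N_I; exact: I_nil.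
have -> : x :: l = mono x.1 x.2 ++ l by case: x {hl}.
apply: N_cat; last by apply: IH => y hy; apply: hl; right.
have e : qmul (mono x.1 0) (mono 1 x.2) = mono x.1 x.2.
  by rewrite /qmul /pmul /mono /= mulr1 add0r.
rewrite -e; apply: N_mul; apply: hA; exact: hl x (or_introl erefl).
Qed.
End KQ.


Ltac ac :=
  rewrite ?addr0 ?add0r -?addrA;
  repeat match goal with
  | |- ?x = ?x => reflexivity
  | |- ?x + ?l = ?x + ?r => apply: (congr1 (fun t => x + t))
  | |- ?x + ?l = ?r => try rewrite [in RHS](addrC _ x); do 12? rewrite [in RHS](addrCA _ x)
  end.

Definition Ind (k : fieldType) (A : Prop) : k := if cl A then 1 else 0.

Lemma Phi_const (k : fieldType) (M : Type) (c : k) (F : mpoly k M) :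
  Phi (fun _ => c) F = c * Phi (fun _ => 1) F.
Proof. by rewrite /Phi big_distrr; apply: eq_bigr => x _; rewrite mulr1 mulrC. Qed.

Lemma Phi_zero (k : fieldType) (M : Type) (F : mpoly k M) : Phi (fun _ => 0) F = 0.
Proof. by rewrite /Phi big1 // => x _; rewrite mulr0. Qed.

Lemma Phi_filter (k : fieldType) (M : Type) (psi : M -> k) (p : pred (k * M)) (F : mpoly k M) :
  Phi psi F = Phi psi (filter p F) + Phi psi (filter (fun x => ~~ p x) F).
Proof.
elim: F => [|x F IH] /=; first by rewrite /Phi !big_nil addr0.
by case: (p x) => /=; rewrite !Phi_cons IH; [rewrite addrA|rewrite addrCA].
Qed.

Lemma In_filter (T : Type) (p : pred T) x (s : seq T) :
  List.In x (filter p s) -> List.In x s /\ p x.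
Proof.
elim: s => [|y s IH] //=; case: ifP => hy /=.
  by case=> [<-|/IH [h1 h2]]; split=> //; [left|right].
by move/IH=> [h1 h2]; split=> //; right.
Qed.

Lemma Phi_neg (k : fieldType) (M : Type) (psi : M -> k) (F : mpoly k M) :
  Phi psi [seq (- x.1, x.2) | x <- F] = - Phi psi F.
Proof. by rewrite Phi_map /Phi -sumrN; apply: eq_bigr => x _; rewrite mulNr. Qed.

Section Loc.
Variables (k : fieldType) (Q : nmodType) (P : Q -> Prop).
Hypothesis HP : prime_mideal P.

Lemma P0 : ~ P 0.
Proof.
case: HP => [[q hq] [hup _]] h; apply: hq; have := hup 0 q h; by rewrite add0r.
Qed.
Lemma Padd a b : ~ P a -> ~ P b -> ~ P (a + b).
Proof. by move=> ha hb /(proj1 (proj2 (proj2 HP))) [/ha|/hb]. Qed.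
Lemma Pup a b : P a -> P (a + b).
Proof. exact: (proj1 (proj2 HP)). Qed.

Lemma locr_refl x : locr P x x.
Proof. by exists 0; split; [exact: P0|]. Qed.
Lemma locr_sym x y : locr P x y -> locr P y x.
Proof. by move=> [w [hw e]]; exists w; split=> //; rewrite e. Qed.
Lemma locr_trans x y z : ~ P y.2 -> locr P x y -> locr P y z -> locr P x z.
Proof.
move=> hy [w1 [h1 e1]] [w2 [h2 e2]]; exists (y.2 + w1 + w2); split.
  by apply: Padd => //; apply: Padd.
have -> : x.1 + z.2 + (y.2 + w1 + w2) = (x.1 + y.2 + w1) + (z.2 + w2) by ac.
rewrite e1.
have -> : y.1 + x.2 + w1 + (z.2 + w2) = (y.1 + z.2 + w2) + (x.2 + w1) by ac.
rewrite e2; ac.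
Qed.
Lemma locr_addl z x y : locr P x y -> locr P (locadd z x) (locadd z y).
Proof.
move=> [w [hw e]]; exists w; split=> //; rewrite /locadd /=.
have -> : z.1 + x.1 + (z.2 + y.2) + w = (x.1 + y.2 + w) + (z.1 + z.2) by ac.
rewrite e; ac.
Qed.
Lemma locr_addr z x y : locr P x y -> locr P (locadd x z) (locadd y z).
Proof.
move=> [w [hw e]]; exists w; split=> //; rewrite /locadd /=.
have -> : x.1 + z.1 + (y.2 + z.2) + w = (x.1 + y.2 + w) + (z.1 + z.2) by ac.
rewrite e; ac.
Qed.

Definition dom (x : Q * Q) := ~ P x.2.
Definition locinv (psi : Q * Q -> k) :=
  forall u v, dom u -> dom v -> locr P u v -> psi u = psi v.

Lemma ind_inv m : locinv (ind (locr P) m).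
Proof.
move=> u v hu hv huv; rewrite /ind; congr (if _ then _ else _); apply: cl_iff; split.
  by move=> hum; apply: (locr_trans hu (locr_sym huv) hum).
by move=> hvm; apply: (locr_trans hv huv hvm).
Qed.

Lemma pmul_dom (a b : mpoly k (Q * Q)) : kQP_dom P a -> kQP_dom P b ->
  kQP_dom P (pmul (@locadd Q) a b).
Proof.
move=> ha hb z hz; have [x [y [hx [hy ->]]]] := In_pmul hz.
by apply: Padd; [apply: ha|apply: hb].
Qed.

Definition den (U : Q) (g : mpoly k Q) : mpoly k (Q * Q) := [seq (x.1, (x.2, U)) | x <- g].

Lemma Phi_den psi U g : Phi psi (den U g) = Phi (fun q => psi (q, U)) g.
Proof. by rewrite /den Phi_map. Qed.
Lemma den_cat U f g : den U (f ++ g) = den U f ++ den U g.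
Proof. exact: map_cat. Qed.

Lemma den_shift psi (hpsi : locinv psi) U V h : ~ P U -> ~ P V ->
  Phi psi (den V h) = Phi psi (den (V + U) (qmul (mono 1 U) h)).
Proof.
move=> hU hV; rewrite !Phi_den /qmul Phi_pmul Phi_mono mul1r.
apply: Phi_ext => y _; apply: hpsi => //; first by apply: Padd.
by exists 0; split; [exact: P0|rewrite /=; ac].
Qed.

Lemma ClearD (c : mpoly k (Q * Q)) : kQP_dom P c -> exists V c', ~ P V /\
  List.Forall2 (fun x y => x.1 = y.1 /\ (locr P x.2 (y.2, V) /\ ~ P x.2.2)) c c'.
Proof.
elim: c => [|x c IH] hc.
  by exists 0, [::]; split; [exact: P0|constructor].
have [V [c' [hV hF]]] := IH (fun y hy => hc y (or_intror hy)).
have hx : ~ P x.2.2 := hc x (or_introl erefl).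
exists (x.2.2 + V), ((x.1, x.2.1 + V) :: [seq (y.1, y.2 + x.2.2) | y <- c']).
split; first by apply: Padd.
constructor.
  split=> //; split=> //; exists 0; split; [exact: P0|rewrite /=; ac].
clear IH hc; elim: hF => [|x0 y c0 c0' [h1 [[w [hw e]] h3]] _ IH] /=; first by constructor.
constructor=> //; split=> //; split=> //; exists w; split=> //=.
have -> : x0.2.1 + (x.2.2 + V) + w = (x0.2.1 + V + w) + x.2.2 by ac.
rewrite e /=; ac.
Qed.

Lemma Phi_clear psi (hpsi : locinv psi) (a : mpoly k (Q * Q)) a' V f : ~ P V ->
  List.Forall2 (fun x y => x.1 = y.1 /\ (locr P x.2 (y.2, V) /\ ~ P x.2.2)) a a' ->
  Phi psi (pmul (@locadd Q) a (toP f)) = Phi psi (den V (qmul a' f)).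
Proof.
move=> hV hF; rewrite Phi_pmul Phi_den /qmul Phi_pmul; apply: Phi_F2.
apply: List.Forall2_impl hF => x y [h1 [h2 h3]]; split=> //.
rewrite (_ : toP f = den 0 f) // Phi_den; apply: Phi_ext => z _.
rewrite /=; apply: hpsi.
- by apply: Padd => //; exact: P0.
- by [].
have := locr_addr (z.2, 0) h2; rewrite {2}/locadd /= addr0 //.
Qed.

Lemma IPrep (I : mpoly k Q -> Prop) : binomial_ideal I -> forall F, IP I P F ->
  exists U g, ~ P U /\ I g /\ peq (locr P) F (den U g).
Proof.
move=> HI F [hD [l [hl he]]].
suff [U [g [hU [hg he']]]] : exists U g, ~ P U /\ I g /\
    peq (locr P) (flatten [seq pmul (@locadd Q) x.1 x.2 | x <- l]) (den U g).
  by exists U, g; split=> //; split=> // m; rewrite he he'.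
elim: l hl {he} => [|[a b] l IH] hl.
  by exists 0, [::]; split; [exact: P0|split; [exact: (I_nil HI)|]].
have [hx1 [f [hf hb]]] := hl (a, b) (or_introl erefl); rewrite /= in hx1 hb; subst b.
have [U [g [hU [hg e1]]]] := IH (fun y hy => hl y (or_intror hy)).
have [V [a' [hV hF]]] := ClearD hx1.
exists (V + U), (qmul (mono 1 U) (qmul a' f) ++ qmul (mono 1 V) g).
split; first by apply: Padd.
split; first by apply: (I_cat HI); do ! apply: (I_mul HI).
move=> m; rewrite /= !coefPhi Phi_cat den_cat Phi_cat.
rewrite (Phi_clear (ind_inv m) f hV hF) -(den_shift (ind_inv m) (qmul a' f) hU hV).
congr (_ + _); rewrite -coefPhi e1 coefPhi addrC.
by rewrite -(den_shift (ind_inv m) g hV hU).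
Qed.
Lemma clP (A : Prop) : cl A = true <-> A.
Proof. by rewrite /cl; case: excluded_middle_informative. Qed.
End Loc.

Arguments Ind {k} A.

Section W.
Variables (k : fieldType) (Q : nmodType) (P : Q -> Prop).
Hypothesis HP : prime_mideal P.

Definition Erel (a b : Q) := exists w, ~ P w /\ a + w = b + w.
Lemma Erel_refl a : Erel a a. Proof. by exists 0; split; [exact: P0|]. Qed.
Lemma Erel_sym a b : Erel a b -> Erel b a.
Proof. by move=> [w [hw e]]; exists w. Qed.
Lemma Erel_trans a b c : Erel a b -> Erel b c -> Erel a c.
Proof.
move=> [w1 [h1 e1]] [w2 [h2 e2]]; exists (w1 + w2); split; first by apply: Padd.
by rewrite !addrA e1 addrAC e2 addrAC.
Qed.

Lemma Wsame (a : Q) (L : mpoly k Q) : (forall x, List.In x L -> Erel x.2 a) ->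
  exists W, ~ P W /\ forall x, List.In x L -> x.2 + W = a + W.
Proof.
elim: L => [|x L IH] h; first by exists 0; split; [exact: P0|].
have [W [hW hL]] := IH (fun y hy => h y (or_intror hy)).
have [w [hw e]] := h x (or_introl erefl).
exists (w + W); split; first by apply: Padd.
move=> y [<-|hy]; first by rewrite addrA e addrA.
by rewrite addrCA hL // addrCA.
Qed.

Lemma Wlem n (D : mpoly k Q) : (size D <= n)%N ->
  (forall a, Phi (fun q => Ind (Erel q a)) D = 0) ->
  exists w, ~ P w /\ forall v b, Phi (fun q => Ind (q + w + v = b)) D = 0.
Proof.
elim: n D => [|n IH] D.
  rewrite leqn0 => /nilP -> _; exists 0; split; [exact: P0|] => v b.
  by rewrite Phi_nil.
case: D => [|x D'] hs H.
  by exists 0; split; [exact: P0|] => v b; rewrite Phi_nil.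
set D := x :: D'.
set a := x.2.
pose p := fun y : k * Q => cl (Erel y.2 a).
have hpx : p x = true by rewrite /p clT //; exact: Erel_refl.
set C := filter p D.
set R := filter (fun y => ~~ p y) D.
have hsR : (size R <= n)%N.
  rewrite /R /D /= hpx /= size_filter.
  by apply: leq_trans (count_size _ _) _.
have C1 : Phi (fun _ => 1) C = 0.
  have := H a; rewrite (Phi_filter _ p) -/C -/R.
  rewrite (@Phi_ext _ _ _ (fun _ => 1) C); last first.
    by move=> y hy0; have [_ hy] := In_filter hy0; move: hy; rewrite /Ind /p => ->.
  rewrite (@Phi_ext _ _ _ (fun _ => 0) R); last first.
    by move=> y hy0; have [_ hy] := In_filter hy0; rewrite /Ind; move: hy; rewrite /p; case: cl.
  by rewrite Phi_zero addr0.
have HR : forall a', Phi (fun q => Ind (Erel q a')) R = 0.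
  move=> a'; have := H a'; rewrite (Phi_filter _ p) -/C -/R.
  rewrite (@Phi_ext _ _ _ (fun _ => Ind (Erel a a')) C); last first.
    move=> y hy0; have [_ hy] := In_filter hy0; rewrite /Ind; congr (if _ then _ else _).
    apply: cl_iff; move: hy; rewrite /p => hy; have {}hy := proj1 (clP _) hy; split=> h.
      exact: Erel_trans (Erel_sym hy) h.
    exact: Erel_trans hy h.
  by rewrite Phi_const C1 mulr0 add0r.
have [wR [hwR HwR]] := IH R hsR HR.
have [W [hW HW]] := @Wsame a C (fun y hy => proj1 (clP _) (proj2 (In_filter hy))).
exists (W + wR); split; first by apply: Padd.
move=> v b; rewrite (Phi_filter _ p) -/C -/R.
rewrite (@Phi_ext _ _ _ (fun _ => Ind (a + (W + wR) + v = b)) C); last first.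
  by move=> y hy; rewrite !addrA HW.
rewrite Phi_const C1 mulr0 add0r.
rewrite (@Phi_ext _ _ _ (fun q => Ind (q + wR + (W + v) = b)) R); last first.
  by move=> y _; rewrite /=; congr (Ind (_ = b)); ac.
exact: HwR.
Qed.
End W.

Section DenEq.
Variables (k : fieldType) (Q : nmodType) (P : Q -> Prop).
Hypothesis HP : prime_mideal P.

Lemma locr_den W q a : ~ P W -> (locr P (q, W) (a, W) <-> Erel P q a).
Proof.
move=> hW; split.
  move=> [w [hw e]]; exists (W + w); split; first by apply: (Padd HP).
  by rewrite !addrA.
move=> [w [hw e]]; exists w; split=> //=.
by rewrite addrAC e addrAC.
Qed.

Lemma den_eq U V (h g : mpoly k Q) : ~ P U -> ~ P V ->
  peq (locr P) (den V h) (den U g) ->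
  exists w, ~ P w /\ qeq (qmul (mono 1 w) (qmul (mono 1 U) h))
                         (qmul (mono 1 w) (qmul (mono 1 V) g)).
Proof.
move=> hU hV he.
set h' := qmul (mono 1 U) h; set g' := qmul (mono 1 V) g.
have hW : ~ P (V + U) by apply: (Padd HP).
have e : forall m, Phi (ind (locr P) m) (den (V + U) h') =
                   Phi (ind (locr P) m) (den (V + U) g').
  move=> m; rewrite -(den_shift HP (ind_inv k HP m) h hU hV).
  rewrite [V + U]addrC -(den_shift HP (ind_inv k HP m) g hV hU).
  by rewrite -!coefPhi he.
pose D := h' ++ [seq (- x.1, x.2) | x <- g'].
have [w [hw Hw]] : exists w, ~ P w /\ forall v b, Phi (fun q => Ind (q + w + v = b)) D = 0.
  apply: (@Wlem k Q P HP (size D) D (leqnn _)) => a.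
  rewrite /D Phi_cat Phi_neg.
  have := e (a, V + U); rewrite !Phi_den.
  rewrite (@Phi_ext _ _ _ (fun q => Ind (Erel P q a)) h'); last first.
    by move=> y _; rewrite /ind /Ind (cl_iff (locr_den y.2 a hW)).
  rewrite (@Phi_ext _ _ _ (fun q => Ind (Erel P q a)) g'); last first.
    by move=> y _; rewrite /ind /Ind (cl_iff (locr_den y.2 a hW)).
  by move=> ->; rewrite subrr.
exists w; split=> //; rewrite /qeq /peq => n; rewrite !coefPhi /qmul !Phi_pmul !Phi_mono !mul1r.
have := Hw 0 n; rewrite /D Phi_cat Phi_neg => /eqP; rewrite subr_eq0 => /eqP.
rewrite (@Phi_ext _ _ _ (fun q => ind (@eq Q) n (w + q)) h'); last first.
  by move=> y _; rewrite /Ind /ind addr0 addrC.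
rewrite (@Phi_ext _ _ _ (fun q => ind (@eq Q) n (w + q)) g') //.
by move=> y _; rewrite /Ind /ind addr0 addrC.
Qed.
End DenEq.


Section Char.
Variables (k : fieldType) (Q : nmodType) (P : Q -> Prop).
Variables (K : Q * Q -> Prop) (sigma : Q * Q -> k).
Hypothesis HP : prime_mideal P.
Hypothesis Hc : is_character P K sigma.

Let Kdom g : K g -> ~ P g.2. Proof. by move=> /(proj1 Hc) []. Qed.
Let Kinv g h : K g -> ~ P h.2 -> locr P g h -> K h /\ sigma g = sigma h.
Proof. exact: (proj1 (proj2 Hc)). Qed.
Let K00 : K (0, 0). Proof. exact: (proj1 (proj2 (proj2 Hc))). Qed.
Let Kadd g h : K g -> K h -> K (locadd g h).
Proof. exact: (proj1 (proj2 (proj2 (proj2 Hc)))). Qed.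
Let Kopp g : K g -> K (g.2, g.1).
Proof. exact: (proj1 (proj2 (proj2 (proj2 (proj2 Hc))))). Qed.
Let Knz g : K g -> sigma g != 0.
Proof. exact: (proj1 (proj2 (proj2 (proj2 (proj2 (proj2 Hc)))))). Qed.
Let Kmul g h : K g -> K h -> sigma (locadd g h) = sigma g * sigma h.
Proof. exact: (proj2 (proj2 (proj2 (proj2 (proj2 (proj2 Hc)))))). Qed.

Lemma K_notP1 g : K g -> ~ P g.1.
Proof.
move=> /(proj1 Hc) [hg2 [h [hh2 [w [hw e]]]]] hg1.
have : P (g.1 + h.1 + 0 + w) by do 3 apply: (Pup HP).
rewrite /= in e; rewrite e; apply: (Padd HP) => //; apply: (Padd HP); first exact: (P0 HP).
exact: (Padd HP).
Qed.

Definition psi0 (y : Q * Q) : k := if cl (K y) then sigma y else 0.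

Lemma psi0_inv : locinv P psi0.
Proof.
move=> u v hu hv huv; rewrite /psi0; case: (classic (K u)) => ku.
  have [kv e] := Kinv ku hv huv; by rewrite !clT.
rewrite !clF // => kv; apply: ku.
by apply: (proj1 (Kinv kv hu (locr_sym huv))).
Qed.

Lemma sigma00 : sigma (0, 0) = 1.
Proof.
have e := Kmul K00 K00; rewrite /locadd /= addr0 in e.
apply: (mulfI (Knz K00)); by rewrite mulr1 -e.
Qed.

Lemma psi0_00 : psi0 (0, 0) = 1.
Proof. by rewrite /psi0 clT // sigma00. Qed.

Lemma psi0_uu u : ~ P u -> psi0 (u, u) = 1.
Proof.
move=> hu; rewrite -psi0_00; apply: psi0_inv => //=; first exact: (P0 HP).
by exists 0; split; [exact: (P0 HP)|rewrite /=; ac].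
Qed.

Lemma psi0_P g : P g.1 -> psi0 g = 0.
Proof. by move=> h; rewrite /psi0 clF // => /K_notP1. Qed.

Definition Z (f : mpoly k (Q * Q)) :=
  forall a, kQP_dom P a -> Phi psi0 (pmul (@locadd Q) a f) = 0.

Lemma locaddA (x y z : Q * Q) : locadd x (locadd y z) = locadd (locadd x y) z.
Proof. by rewrite /locadd /= !addrA. Qed.

Lemma dom_cat (f g : mpoly k (Q * Q)) : kQP_dom P f -> kQP_dom P g -> kQP_dom P (f ++ g).
Proof. by move=> hf hg x /In_cat [/hf|/hg]. Qed.

Lemma Z_peq f f' : kQP_dom P f -> kQP_dom P f' -> peq (locr P) f f' -> Z f -> Z f'.
Proof.
move=> hf hf' he hZ a ha.
have E : forall F, Phi psi0 (pmul (@locadd Q) a F) =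
    Phi (fun b => Phi (fun x => psi0 (locadd x b)) a) F.
  by move=> F; rewrite Phi_pmul (Phi_exch (fun x b => psi0 (locadd x b))).
rewrite E -(GL (r := locr P) (A := fun x => ~ P x.2) (locr_refl HP) (@locr_sym Q P)
   (fun x y z hy => @locr_trans Q P HP x y z hy) _ hf hf' he) -?E ?hZ //.
move=> x y hx hy hxy; apply: Phi_ext => z hz; apply: psi0_inv.
- by apply: (Padd HP) => //; apply: ha.
- by apply: (Padd HP) => //; apply: ha.
exact: locr_addl.
Qed.

Lemma Z_cat f g : Z f -> Z g -> Z (f ++ g).
Proof. by move=> hf hg a ha; rewrite Phi_pmul_catr hf ?hg ?addr0. Qed.

Lemma Z_nil : Z [::].
Proof.
move=> a ha; rewrite Phi_pmul (@Phi_ext _ _ _ (fun _ => 0)) ?Phi_zero //.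
by move=> y _; rewrite Phi_nil.
Qed.

Lemma Z_flatten (L : seq (mpoly k (Q * Q))) : (forall f, List.In f L -> Z f) -> Z (flatten L).
Proof.
elim: L => [|f L IH] h /=; first exact: Z_nil.
by apply: Z_cat; [apply: h; left|apply: IH => g hg; apply: h; right].
Qed.

Lemma Z_mul x1 g : kQP_dom P x1 -> Z g -> Z (pmul (@locadd Q) x1 g).
Proof.
move=> hx hg a ha; rewrite -Phi_pmulA; last exact: locaddA.
by apply: hg; apply: (pmul_dom HP).
Qed.

Lemma dom_flatten (L : seq (mpoly k (Q * Q))) : (forall f, List.In f L -> kQP_dom P f) ->
  kQP_dom P (flatten L).
Proof.
move=> h x hx; have [s [hs hxs]] := In_flatten hx; exact: h s hs x hxs.
Qed.

Lemma Z_gen (S : mpoly k (Q * Q) -> Prop) f :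
  (forall s, S s -> kQP_dom P s /\ Z s) ->
  gen_ideal (locr P) (@locadd Q) (kQP_dom P) S f -> Z f.
Proof.
move=> hS [hD [l [hl he]]].
have hdom : kQP_dom P (flatten [seq pmul (@locadd Q) x.1 x.2 | x <- l]).
  apply: dom_flatten => g hg; have [x [hx ->]] := In_map hg.
  have [h1 h2] := hl x hx; apply: (pmul_dom HP); [exact: h1|exact: proj1 (hS _ h2)].
apply: (Z_peq hdom hD); first by move=> m; rewrite he.
apply: Z_flatten => g hg; have [x [hx ->]] := In_map hg.
have [h1 h2] := hl x hx; apply: Z_mul => //; exact: proj2 (hS _ h2).
Qed.

Lemma psi0_key x h v : ~ P x.2 -> K h -> ~ P v.2 ->
  psi0 (locadd x (locadd h v)) = sigma h * psi0 (locadd x v).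
Proof.
move=> hx kh hv; rewrite /psi0.
have dxv : ~ P (locadd x v).2 by apply: (Padd HP).
have dxhv : ~ P (locadd x (locadd h v)).2.
  by apply: (Padd HP) => //; apply: (Padd HP) => //; apply: Kdom.
case: (classic (K (locadd x v))) => kxv.
  have k1 := Kadd kh kxv.
  have hl : locr P (locadd h (locadd x v)) (locadd x (locadd h v)).
    by exists 0; split; [exact: (P0 HP)|rewrite /locadd /=; ac].
  have [k2 e] := Kinv k1 dxhv hl.
  by rewrite !clT // -e Kmul.
rewrite !clF ?mulr0 // => k2; apply: kxv.
have k3 := Kadd (Kopp kh) k2.
apply: (proj1 (Kinv k3 dxv _)).
by exists 0; split; [exact: (P0 HP)|rewrite /locadd /=; ac].
Qed.

Lemma Z_Irho s : (exists h v, K h /\ ~ P v.2 /\ s = binom (locadd h v) v (sigma h)) ->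
  kQP_dom P s /\ Z s.
Proof.
move=> [h [v [kh [hv ->]]]]; split.
  move=> x [<-|[<-|[]]] //=; apply: (Padd HP) => //; exact: Kdom.
move=> a ha; rewrite Phi_pmul (@Phi_ext _ _ _ (fun _ => 0)) ?Phi_zero //.
move=> x hx; rewrite /binom !Phi_cons Phi_nil /= psi0_key //; last exact: ha.
by rewrite mul1r addr0 mulNr subrr.
Qed.

Lemma Z_mPgen s : (exists a u, P a /\ ~ P u /\ s = mono 1 (a, u)) -> kQP_dom P s /\ Z s.
Proof.
move=> [a0 [u [ha0 [hu ->]]]]; split; first by move=> x [<-|[]].
move=> a ha; rewrite Phi_pmul (@Phi_ext _ _ _ (fun _ => 0)) ?Phi_zero //.
move=> x hx; rewrite Phi_mono psi0_P ?mulr0 //= addrC; exact: Pup.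
Qed.

Lemma Z_mP m : mP P m -> Z m.
Proof. by apply: Z_gen; exact: Z_mPgen. Qed.

Lemma Z_ppL F : locsum P (Irho P K sigma) (mP P) F -> Z F.
Proof.
move=> [hD [f1 [f2 [h1 [h2 he]]]]].
apply: (@Z_peq (f1 ++ f2) F).
- by apply: dom_cat; [exact: proj1 h1|exact: proj1 h2].
- exact: hD.
- by move=> m; rewrite -he.
by apply: Z_cat; [exact: (Z_gen Z_Irho h1)|exact: Z_mP].
Qed.

Lemma Phi_unit (F : mpoly k (Q * Q)) psi : Phi psi (pmul (@locadd Q) (mono 1 (0, 0)) F) = Phi psi F.
Proof.
rewrite Phi_pmul Phi_mono mul1r; apply: Phi_ext => y _.
by rewrite /locadd /= !add0r -surjective_pairing.
Qed.

Lemma Z_Phi F : Z F -> Phi psi0 F = 0.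
Proof.
move=> hZ; rewrite -Phi_unit; apply: hZ => x [<-|[]] /=; exact: (P0 HP).
Qed.

Lemma dom_mono (c : k) (z : Q * Q) : ~ P z.2 -> kQP_dom P (mono c z).
Proof. by move=> h x [<-|[]]. Qed.

Lemma pp_mono u : ~ P u -> ~ IsigP P K sigma (mono 1 u).
Proof.
move=> hu /Z_ppL hZ; have := hZ (mono 1 (0, u)) (@dom_mono 1 ((0, u)) hu).
rewrite Phi_pmul Phi_mono mul1r /toP /= Phi_cons Phi_nil addr0 mul1r.
by rewrite /locadd /= add0r addr0 psi0_uu // => /eqP; rewrite oner_eq0.
Qed.

Lemma pp_minf p w c : P p -> ~ P w -> c != 0 -> ~ IsigP P K sigma (binom (p + w) w c).
Proof.
move=> hp hw hc /Z_ppL hZ; have := hZ (mono 1 (0, w)) (@dom_mono 1 ((0, w)) hw).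
rewrite Phi_pmul Phi_mono mul1r /toP /= !Phi_cons Phi_nil addr0.
rewrite /locadd /= !add0r !addr0 psi0_uu // psi0_P /=; last exact: Pup.
by rewrite mulr0 add0r mulr1 => /eqP; rewrite oppr_eq0 (negbTE hc).
Qed.

Lemma pp_clear (c : mpoly k (Q * Q)) c' V : ~ P V ->
  List.Forall2 (fun x y => x.1 = y.1 /\ (locr P x.2 (y.2, V) /\ ~ P x.2.2)) c c' ->
  Phi psi0 c != 0 -> ~ IsigP P K sigma c'.
Proof.
move=> hV hF hc /Z_ppL hZ; have := hZ (mono 1 (0, V)) (@dom_mono 1 ((0, V)) hV).
rewrite Phi_pmul Phi_mono mul1r (_ : toP c' = den 0 c') // Phi_den.
rewrite (@Phi_ext _ _ _ (fun q => psi0 (q, V)) c'); last first.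
  by move=> y _; rewrite /locadd /= add0r addr0.
move=> e; move/eqP: hc; apply; rewrite -e.
apply: Phi_F2; apply: List.Forall2_impl hF => x y [h1 [h2 h3]]; split=> //.
by apply: psi0_inv => //.
Qed.
End Char.


Section Main.
Variables (k : fieldType) (Q : nmodType).
Variables (I : mpoly k Q -> Prop) (P : Q -> Prop).
Variables (K : Q * Q -> Prop) (sigma : Q * Q -> k).
Hypothesis HI : binomial_ideal I.
Hypothesis HP : prime_mideal P.
Hypothesis Hc : is_character P K sigma.
Hypothesis Hpp : prime_ideal (IsigP P K sigma).

Let pp := IsigP P K sigma.

Lemma minf_gen g : (exists q p, P p /\ barr I P (q + p, 0) (q, 0) /\ g = mono 1 q) ->
  loc_kernel I pp g.
Proof.
move=> [q [p [hp [[w [hw [c [hc hI]]]] ->]]]].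
exists (binom (p + w) w c); split; first exact: (pp_minf HP Hc hp hw hc).
have -> : qmul (binom (p + w) w c) (mono 1 q) = binom (q + p + 0 + w) (q + 0 + w) c.
  rewrite /qmul /pmul /binom /mono /= !mulr1; congr [:: (_, _); (_, _)]; ac.
by rewrite /= in hI.
Qed.

Lemma msig_case1 q : IP I P (mono 1 (q, 0)) -> loc_kernel I pp (mono 1 q).
Proof.
move=> hIP; have [U [g0 [hU [hg0 e]]]] := IPrep HP HI hIP.
have e' : peq (locr P) (den 0 (mono 1 q)) (den U g0) by [].
have [w [hw e2]] := den_eq HP hU (P0 HP) e'.
exists (mono 1 (w + U)); split; first by apply: (pp_mono HP Hc); apply: (Padd HP).
have hI : I (qmul (mono 1 w) (qmul (mono 1 U) (mono 1 q))).
  by apply: (I_qeq HI (qeq_sym e2)); do 2 apply: (I_mul HI).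
move: hI; congr I; rewrite /qmul /pmul /mono /= !mulr1 addrA //.
Qed.

Lemma msig_case2 q rho : char_at I P q rho -> ~ restricts K sigma (Kq I P q) rho ->
  loc_kernel I pp (mono 1 q).
Proof.
move=> [hch hiff] hnr.
have [g [hg hng]] : exists g, Kq I P q g /\ ~ (K g /\ rho g = sigma g).
  apply: NNPP => H; apply: hnr; split=> g hg;
    (case: (classic (K g /\ rho g = sigma g)) => [[]//|hn]; exfalso; apply: H; by exists g).
have gGP : GP P g := proj1 hch g hg.
have gdom : ~ P g.2 := proj1 gGP.
have rnz : rho g != 0 := proj1 (proj2 (proj2 (proj2 (proj2 (proj2 hch))))) g hg.
set b := binom (locadd g (0, 0)) (0, 0) (rho g).
have bdom : kQP_dom P b.
  move=> x [<-|[<-|[]]] /=; last exact: (P0 HP).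
  by apply: (Padd HP) => //; exact: (P0 HP).
have bin : locsum P (Irho P (Kq I P q) rho) (mP P) b.
  split=> //; exists b, [::]; split.
    split=> //; exists [:: (mono 1 (0, 0), b)]; split.
      move=> x [<-|[]]; split; first by apply: dom_mono; exact: (P0 HP).
      by exists g, (0, 0); split=> //; split=> //; exact: (P0 HP).
    by move=> m; rewrite !coefPhi Phi_flatten big_cons big_nil addr0 Phi_unit.
  split; first by split; [move=> x []|exists [::]].
  by move=> m; rewrite cats0.
have [_ [c [m [[hcd hcI] [hm he]]]]] := proj2 (hiff b bdom) bin.
have Phib : Phi (psi0 K sigma) b != 0.
  rewrite /b /binom !Phi_cons Phi_nil addr0 mul1r (psi0_00 Hc) mulr1.
  rewrite (@psi0_inv _ _ _ _ _ Hc (locadd g (0, 0)) g) //; first last.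
  - by exists 0; split; [exact: (P0 HP)|rewrite /locadd /=; ac].
  - by apply: (Padd HP) => //; exact: (P0 HP).
  rewrite /psi0; case: (classic (K g)) => kg.
    rewrite clT // subr_eq0; apply/eqP => e; apply: hng; split=> //; by rewrite e.
  by rewrite clF // add0r oppr_eq0.
have mdom : kQP_dom P m := proj1 hm.
have Phic : Phi (psi0 K sigma) c != 0.
  have e1 : Phi (psi0 K sigma) b = Phi (psi0 K sigma) (c ++ m).
    apply: (GL (r := locr P) (A := fun x => ~ P x.2) (locr_refl HP) (@locr_sym Q P)
       (fun x y z hy => @locr_trans Q P HP x y z hy)) => //.
    - by move=> x y hx hy hxy; apply: (psi0_inv Hc).
    - by apply: (dom_cat hcd mdom).
  rewrite Phi_cat (Z_Phi HP (Z_mP HP Hc hm)) addr0 in e1.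
  by rewrite -e1.
have [V [c' [hV hF]]] := ClearD HP hcd.
have ncp : ~ pp c' := pp_clear HP Hc hV hF Phic.
have [U [g0 [hU [hg0 e2]]]] := IPrep HP HI hcI.
have e3 : peq (locr P) (den V (qmul (mono 1 q) c')) (den U g0).
  move=> m'; rewrite -e2 !coefPhi Phi_den /qmul !Phi_pmul !Phi_mono !mul1r.
  symmetry; apply: Phi_F2; apply: List.Forall2_impl hF => x y [h1 [h2 h3]]; split=> //.
  rewrite /=; apply: (ind_inv k HP m').
  - by apply: (Padd HP) => //; exact: (P0 HP).
  - by [].
  by have := locr_addl (q, 0) h2; rewrite {2}/locadd /= add0r.
have [w [hw e4]] := den_eq HP hU hV e3.
exists (qmul (mono 1 (w + U)) c'); split.
  by apply: (pp_mul Hpp) => //; apply: (pp_mono HP Hc); apply: (Padd HP).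
have hI : I (qmul (mono 1 w) (qmul (mono 1 U) (qmul (mono 1 q) c'))).
  by apply: (I_qeq HI (qeq_sym e4)); do 2 apply: (I_mul HI).
apply: (I_qeq HI _ hI); apply: qeqP => psi.
rewrite /qmul !Phi_pmul !Phi_mono !mul1r Phi_pmul Phi_mono mul1r.
rewrite Phi_pmul Phi_mono mul1r; apply: Phi_ext => y _.
rewrite Phi_mono mul1r; congr psi; ac.
Qed.

Lemma msig_mono q : (IP I P (mono 1 (q, 0)) \/
      (~ IP I P (mono 1 (q, 0)) /\
       exists rho, char_at I P q rho /\ ~ restricts K sigma (Kq I P q) rho)) ->
  loc_kernel I pp (mono 1 q).
Proof.
case=> [h|[_ [rho [h1 h2]]]]; first exact: msig_case1.
exact: msig_case2 h1 h2.
Qed.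

Lemma main_thm f : binloc I P K sigma f -> loc_kernel I pp f.
Proof.
move=> [f1 [f2 [f3 [h1 [h2 [h3 he]]]]]].
apply: (N_qeq HI (qeq_sym he)).
apply: (N_cat HI Hpp); first exact: (N_I HI Hpp).
apply: (N_cat HI Hpp); first exact: (N_gen HI Hpp minf_gen h2).
exact: (N_kspan HI Hpp msig_mono h3).
Qed.
End Main.

Theorem theorem14p9 (k : fieldType) (Q : nmodType)
  (I : mpoly k Q -> Prop) (P : Q -> Prop)
  (K : Q * Q -> Prop) (sigma : Q * Q -> k) :
  fin_gen Q ->
  binomial_ideal I ->
  prime_mideal P ->
  is_character P K sigma ->
  prime_ideal (IsigP P K sigma) ->
  forall f : mpoly k Q, binloc I P K sigma f -> loc_kernel I (IsigP P K sigma) f.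
Proof.
move=> _ HI HP Hc Hpp f hf.
exact: (main_thm HI HP Hc Hpp hf).
Qed.
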